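(* There is a deterministic distributed dynamic data structure for robust $3$-hop neighborhood listing which handles edge insertions and deletions in $O(1)$ amortized rounds.
   Context: Highly dynamic network model: a synchronous network on a fixed set $V$ of $n$ nodes with unique identifiers starts as the empty graph; at the beginning of round $i$ the graph is $G_i=(V,E_i)$, obtained from the previous graph by an adversary inserting and/or deleting an arbitrary (unbounded) set of edges. At the start of each round every node is notified only of the insertions/deletions of edges incident to it; then each node may send a message of $O(\log n)$ bits to each of its current neighbors. A distributed dynamic data structure consists of a local part $DS_v$ at each node $v$; at the end of every round, $DS_v$ may be queried and must answer immediately, without any further communication. The amortized round complexity is at most $c$ if for every round $i$, the number of rounds up to round $i$ in which at least one node $v$ has $DS_v$ in an inconsistent state, divided by the total number of topology changes that occurred up to round $i$, is at most $c$. For an edge $e$, its insertion time $t_e$ is the latest round in which $e$ was inserted. Let $E^{v,3}_i$ be the set of edges of $G_i$ having an endpoint at distance at most $2$ from $v$. The robust $3$-hop neighborhood $R^{v,3}_i\subseteq E^{v,3}_i$ consists of: all edges of $G_i$ incident to $v$; the edges of every path $v-u-w$ in $G_i$ with $t_{\{u,w\}}\geq t_{\{v,u\}}$; and the edges of every path $v-u-w-x$ in $G_i$ with $t_{\{w,x\}}\geq t_{\{u,w\}}$ and $t_{\{w,x\}}\geq t_{\{v,u\}}$. Robust $3$-hop neighborhood listing: in round $i$, $DS_v$ must respond to a query $\{u,w\}$ with $\texttt{true}$ if $\{u,w\}\in R^{v,3}_{i-1}$, with $\texttt{false}$ if $\{u,w\}\notin E^{v,3}_{i-1}$, or with $\texttt{inconsistent}$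 if $DS_v$ is in an inconsistent state. *)

(* Defs.v *)
From mathcomp Require Import all_boot.

Set Implicit Arguments.
Unset Strict Implicit.
Unset Printing Implicit Defensive.

(* Node set V = 'I_n (node identifiers are the indices themselves).
   A dynamic graph: G i u w = "edge {u,w} is present in G_i".           *)
Definition dgraph (n : nat) := nat -> 'I_n -> 'I_n -> bool.

(* G_0 is empty; every G_i is a simple undirected graph; the adversary
   may change arbitrarily many edges between consecutive rounds.        *)
Definition valid_dgraph (n : nat) (G : dgraph n) : Prop :=
  (forall u w, G 0 u w = false) /\
  (forall i u w, G i u w = G i w u) /\
  (forall i u, G i u u = false).

Definition ins_time (n : nat) (G : dgraph n) (i : nat) (u w : 'I_n) : nat :=
  \max_(j < i.+1 | G j u w && ~~ G j.-1 u w) (j : nat).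

Definition pair_eq (n : nat) (a b u w : 'I_n) : bool :=
  ((a == u) && (b == w)) || ((a == w) && (b == u)).

(* {a,b} in E^{v,3}_i : edge of G_i with an endpoint at distance <= 2 from v *)
Definition in_E3 (n : nat) (G : dgraph n) (i : nat) (v a b : 'I_n) : bool :=
  G i a b &&
  [exists x : 'I_n, ((x == a) || (x == b)) &&
     [|| x == v, G i v x | [exists y : 'I_n, G i v y && G i y x]]].

(* {a,b} in R^{v,3}_i : the robust 3-hop neighborhood *)
Definition in_R3 (n : nat) (G : dgraph n) (i : nat) (v a b : 'I_n) : bool :=
  let t := ins_time G i in
  G i a b &&
  [|| (a == v) || (b == v),
      [exists u : 'I_n, exists w : 'I_n,
         [&& G i v u, G i u w, pair_eq a b u w & t v u <= t u w]]
    | [exists u : 'I_n, exists w : 'I_n, exists x : 'I_n,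
         [&& G i v u, G i u w, G i w x, pair_eq a b w x,
             t u w <= t w x & t v u <= t w x]]].

Definition num_changes (n : nat) (G : dgraph n) (j : nat) : nat :=
  #|[set p : 'I_n * 'I_n | (p.1 < p.2)%N && (G j p.1 p.2 != G j.-1 p.1 p.2)]|.

Definition total_changes (n : nat) (G : dgraph n) (i : nat) : nat :=
  \sum_(1 <= j < i.+1) num_changes G j.

(* Round i: each node v is notified of the inserted and deleted incident
   edges (as sets of neighbours), then sends a message (bit string) to
   each current neighbour, then updates its state with the received
   messages (labelled by sender).  At the end of the round the local part
   DS_v is queried through [doutput]: None = inconsistent state,
   Some f = consistent, answering query {a,b} with f a b.               *)
Record dds_alg (n : nat) := DDSAlg {
  dstate : Type;
  dinit : 'I_n -> dstate;
  dnotify : 'I_n -> dstate -> {set 'I_n} -> {set 'I_n} -> dstate;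
  dsend : 'I_n -> dstate -> 'I_n -> bitseq;
  drecv : 'I_n -> dstate -> ('I_n -> option bitseq) -> dstate;
  doutput : 'I_n -> dstate -> option ('I_n -> 'I_n -> bool) }.

Definition mid_of (n : nat) (A : dds_alg n) (G : dgraph n) (i : nat)
    (prev : 'I_n -> dstate A) (v : 'I_n) : dstate A :=
  @dnotify n A v (prev v) [set u | G i v u && ~~ G i.-1 v u]
                       [set u | ~~ G i v u && G i.-1 v u].

Definition step (n : nat) (A : dds_alg n) (G : dgraph n) (i : nat)
    (prev : 'I_n -> dstate A) (v : 'I_n) : dstate A :=
  @drecv n A v (@mid_of n A G i prev v)
    (fun u => if G i u v then Some (@dsend n A u (@mid_of n A G i prev u) v) else None).

Fixpoint exec (n : nat) (A : dds_alg n) (G : dgraph n) (i : nat) : 'I_n -> dstate A :=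
  match i with
  | 0 => @dinit n A
  | i'.+1 => @step n A G i'.+1 (@exec n A G i')
  end.

Definition msg_bounded (n : nat) (A : dds_alg n) (G : dgraph n) (C : nat) : Prop :=
  forall i (u v : 'I_n), G i.+1 u v ->
    (size (@dsend n A u (@mid_of n A G i.+1 (@exec n A G i) u) v) <= C * (trunc_log 2 n).+1)%N.

(* query semantics: in round i (>= 1) a consistent DS_v answers true on
   R^{v,3}_{i-1} and false outside E^{v,3}_{i-1} *)
Definition answers_correct (n : nat) (A : dds_alg n) (G : dgraph n) : Prop :=
  forall i (v : 'I_n) f, @doutput n A v (@exec n A G i.+1 v) = Some f ->
    forall a b : 'I_n, (in_R3 G i v a b -> f a b) /\ (~~ in_E3 G i v a b -> ~~ f a b).

Definition inconsistent_at (n : nat) (A : dds_alg n) (G : dgraph n) (i : nat) : bool :=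
  [exists v : 'I_n, ~~ isSome (@doutput n A v (@exec n A G i v))].

Definition inconsistent_rounds (n : nat) (A : dds_alg n) (G : dgraph n) (i : nat) : nat :=
  \sum_(1 <= j < i.+1) (inconsistent_at A G j : nat).

(* Main.v *)
Require Import Defs.
From mathcomp Require Import all_boot zify.

Set Implicit Arguments.
Unset Strict Implicit.
Unset Printing Implicit Defensive.

Section LastSel.
Variables (T : Type) (h : T -> option bool).

Definition lastsel (s : seq T) : option bool :=
  foldl (fun acc t => if h t is Some b then Some b else acc) None s.

Lemma foldl_lastsel acc s :
  foldl (fun acc t => if h t is Some b then Some b else acc) acc s =
  if lastsel s is Some b then Some b else acc.
Proof.
rewrite /lastsel; elim: s acc => [|t s IH] acc //=.
rewrite (IH (if h t is Some b then Some b else acc)) (IH (if h t is Some b then Some b else None)).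
by case: (h t) => //=; case: (foldl _ None s).
Qed.

Lemma lastsel_cat s1 s2 :
  lastsel (s1 ++ s2) = if lastsel s2 is Some b then Some b else lastsel s1.
Proof. by rewrite {1}/lastsel foldl_cat foldl_lastsel. Qed.

Lemma lastsel_cons t s :
  lastsel (t :: s) = if lastsel s is Some b then Some b else h t.
Proof. by rewrite -cat1s lastsel_cat /lastsel /=; case: (h t). Qed.

Lemma lastsel_nil : lastsel [::] = None. Proof. by []. Qed.

Lemma lastsel_behead s :
  lastsel s = if lastsel (behead s) is Some b then Some b else obind h (ohead s).
Proof. by case: s => [|t s] //=; rewrite lastsel_cons; case: (lastsel s). Qed.

Lemma odflt_behead (d : bool) s :
  odflt (odflt d (obind h (ohead s))) (lastsel (behead s)) = odflt d (lastsel s).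
Proof. by rewrite (lastsel_behead s); case: (lastsel (behead s)). Qed.

Lemma lastsel_behead_some s b : lastsel (behead s) = Some b -> lastsel s = Some b.
Proof. by rewrite (lastsel_behead s) => ->. Qed.

Lemma lastsel_small s : size s <= 1 -> lastsel s = obind h (ohead s).
Proof. by case: s => [|t [|]] //= _; rewrite lastsel_cons. Qed.

End LastSel.

Lemma lastsel_map_pair (T : eqType) (x : T) (P : T -> bool) (s : seq T) :
  lastsel (fun it : T * bool => if it.1 == x then Some it.2 else None)
     [seq (y, P y) | y <- s] = if x \in s then Some (P x) else None.
Proof.
elim: s => [|y s IH] //=; rewrite lastsel_cons IH in_cons /=.
case: (x \in s); first by rewrite orbT.
rewrite orbF; case: eqP => [->|]; by rewrite ?eqxx // eq_sym; case: eqP.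
Qed.

Lemma lastsel_pmap (A B : Type) (h : B -> option bool) (F : A -> option B) (s : seq A) (P : A -> bool) :
  (forall a, ~~ P a -> obind h (F a) = None) ->
  (forall a a', P a -> P a' -> obind h (F a) = obind h (F a')) ->
  forall a0, P a0 ->
  lastsel h (pmap F s) = if has P s then obind h (F a0) else None.
Proof.
move=> HnP Heq a0 Pa0; elim: s => [|a s IH] //=.
have Ha : obind h (F a) = if P a then obind h (F a0) else None.
  by case: (boolP (P a)) => Pa; [apply: Heq | apply: HnP].
case E: (F a) => [b|] /=.
- rewrite lastsel_cons IH; rewrite E /= in Ha; rewrite Ha.
  by case: (P a); case: (has P s) => //=; case: (obind h (F a0)).
- rewrite IH; rewrite E /= in Ha.
  by case: (boolP (P a)) Ha => Pa //= <-; case: (has P s).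
Qed.

Fixpoint bitsn (k x : nat) : bitseq :=
  if k is k'.+1 then odd x :: bitsn k' x./2 else [::].
Fixpoint nob (s : bitseq) : nat :=
  if s is b :: s' then b + (nob s').*2 else 0.

Lemma size_bitsn k x : size (bitsn k x) = k.
Proof. by elim: k x => [|k IH] x //=; rewrite IH. Qed.

Lemma nob_bitsn k x : x < 2 ^ k -> nob (bitsn k x) = x.
Proof.
elim: k x => [|k IH] x /=; first by rewrite expn0; case: x.
move=> Hx; rewrite IH ?odd_double_half //.
by rewrite ltn_half_double -muln2 -expnSr.
Qed.
Arguments bitsn : simpl never.
Arguments nob : simpl never.
Set Implicit Arguments.
Unset Strict Implicit.
Unset Printing Implicit Defensive.

Section Msg.
Variable n : nat.
Definition kb := (trunc_log 2 n).+1.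

Record msg := Msg {
  m1 : option ('I_n * bool);
  m2 : option ('I_n * option ('I_n * bool));
  mc : bool; me1 : bool; me2 : bool; mp : bool }.

Definition enc (m : msg) : bitseq :=
  let i1 := if m1 m is Some (x, _) then val x else 0 in
  let b1 := if m1 m is Some (_, b) then b else false in
  let i2 := if m2 m is Some (w, _) then val w else 0 in
  let e2 := if m2 m is Some (_, Some _) then true else false in
  let i3 := if m2 m is Some (_, Some (x, _)) then val x else 0 in
  let b2 := if m2 m is Some (_, Some (_, b)) then b else false in
  [:: mc m; me1 m; me2 m; mp m; isSome (m1 m); b1; isSome (m2 m); e2; b2]
    ++ bitsn kb i1 ++ bitsn kb i2 ++ bitsn kb i3.

Definition decid (s : bitseq) (j : nat) : option 'I_n :=
  insub (nob (take kb (drop (9 + j * kb) s))).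

Definition dec (s : bitseq) : msg :=
  let g i := nth false s i in
  Msg (if g 4 then (if decid s 0 is Some x then Some (x, g 5) else None) else None)
      (if g 6 then (if decid s 1 is Some w then
           Some (w, if g 7 then (if decid s 2 is Some x then Some (x, g 8) else None) else None)
         else None) else None)
      (g 0) (g 1) (g 2) (g 3).

Lemma kb_gt0 : 0 < kb. Proof. by []. Qed.
Lemma kbE : kb = (trunc_log 2 n).+1. Proof. by []. Qed.
Opaque kb.
Lemma ord_lt_kb (x : 'I_n) : val x < 2 ^ kb.
Proof. by apply: leq_trans (ltn_ord x) _; apply: ltnW; apply: trunc_log_ltn. Qed.

Lemma decid_enc (l : bitseq) a b c j :
  size l = 9 -> j < 3 ->
  a < 2 ^ kb -> b < 2 ^ kb -> c < 2 ^ kb ->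
  nob (take kb (drop (9 + j * kb) (l ++ bitsn kb a ++ bitsn kb b ++ bitsn kb c)))
  = nth 0 [:: a; b; c] j.
Proof.
move=> Hl Hj Ha Hb Hc.
rewrite drop_cat Hl ltnNge leq_addr /= addKn.
case: j Hj => [|[|[|]]] //= _.
- by rewrite mul0n drop0 take_cat size_bitsn ltnn subnn take0 cats0 nob_bitsn.
- rewrite mul1n drop_cat size_bitsn ltnn subnn drop0.
  by rewrite take_cat size_bitsn ltnn subnn take0 cats0 nob_bitsn.
- have -> : 2 * kb = size (bitsn kb a ++ bitsn kb b) by rewrite size_cat !size_bitsn; lia.
  rewrite catA drop_size_cat // take_oversize ?size_bitsn ?nob_bitsn //.
Qed.

Lemma decK m : dec (enc m) = m.
Proof.
case: m => o1 o2 c e1 e2 p.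
have Ha : (if o1 is Some (x, _) then val x else 0) < 2 ^ kb.
  by case: o1 => [[x ?]|]; [apply: ord_lt_kb | rewrite expn_gt0].
have Hb : (if o2 is Some (w, _) then val w else 0) < 2 ^ kb.
  by case: o2 => [[x ?]|]; [apply: ord_lt_kb | rewrite expn_gt0].
have Hd : (if o2 is Some (_, Some (x, _)) then val x else 0) < 2 ^ kb.
  by case: (o2) => [[? [[x ?]|]]|]; try apply: ord_lt_kb; rewrite expn_gt0.
have E := fun j (Hj : j < 3) => decid_enc (l := [:: c; e1; e2; p; isSome o1;
    (if o1 is Some (_, b) then b else false); isSome o2;
    (if o2 is Some (_, Some _) then true else false);
    (if o2 is Some (_, Some (_, b)) then b else false)]) (erefl _) Hj Ha Hb Hd.
rewrite /dec /decid.
rewrite (E 0 erefl) (E 1 erefl) (E 2 erefl).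
rewrite /=; clear E Ha Hb Hd.
case: o1 => [[x b1]|]; case: o2 => [[w [[y b2]|]]|] /=; by rewrite ?valK.
Qed.

Lemma size_enc m : size (enc m) <= 12 * kb.
Proof. rewrite /enc !size_cat !size_bitsn /=; have := kb_gt0; lia. Qed.

End Msg.
Arguments dec : simpl never.
Arguments enc : simpl never.
Set Implicit Arguments.
Unset Strict Implicit.
Unset Printing Implicit Defensive.

Opaque dec enc.
Section Alg.
Variable n : nat.

Record nst := NSt {
  adj : 'I_n -> bool;
  q1 : seq ('I_n * bool);
  q2 : seq ('I_n * option ('I_n * bool));
  t2 : 'I_n -> 'I_n -> bool;
  t3 : 'I_n -> 'I_n -> 'I_n -> bool;
  chg : bool; pf : bool; okf : bool }.

Definition sel1 (w : 'I_n) (it : 'I_n * bool) : option bool :=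
  if it.1 == w then Some it.2 else None.
Definition sel2 (w x : 'I_n) (it : 'I_n * option ('I_n * bool)) : option bool :=
  if it.1 == w then (if it.2 is Some (y, b) then (if y == x then Some b else None)
                     else Some false) else None.

Definition a_init (v : 'I_n) : nst :=
  NSt (fun _ => false) [::] [::] (fun _ _ => false) (fun _ _ _ => false) false true false.

Definition a_notify (v : 'I_n) (s : nst) (ins del : {set 'I_n}) : nst :=
  NSt (fun x => if x \in ins then true else if x \in del then false else adj s x)
      (q1 s ++ [seq (x, x \in ins) | x <- enum 'I_n & (x \in ins) || (x \in del)])
      (q2 s ++ [seq (x, None) | x <- enum 'I_n & x \in del])
      (fun u => if u \in ins then (fun _ => false) else t2 s u)
      (fun u => if u \in ins then (fun _ _ => false) else t3 s u)
      [exists x, (x \in ins) || (x \in del)]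
      (pf s) (okf s).

Definition a_send (u : 'I_n) (s : nst) (v : 'I_n) : bitseq :=
  enc (Msg (ohead (q1 s)) (ohead (q2 s)) (chg s) (size (q1 s) <= 1) (size (q2 s) <= 1) (pf s)).

Definition fwdf (md : 'I_n -> option (msg n)) (u : 'I_n) :=
  if md u is Some mm then omap (fun it => (u, Some it)) (m1 mm) else None.

Definition a_recv (v : 'I_n) (s : nst) (m : 'I_n -> option bitseq) : nst :=
  let md u := omap (@dec n) (m u) in
  NSt (adj s) (behead (q1 s))
    (behead (q2 s) ++ pmap (fwdf md) (enum 'I_n))
    (fun u w => if md u is Some mm then odflt (t2 s u w) (obind (sel1 w) (m1 mm)) else t2 s u w)
    (fun u w x => if md u is Some mm then odflt (t3 s u w x) (obind (sel2 w x) (m2 mm)) else t3 s u w x)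
    (chg s)
    [forall u, if md u is Some mm then me1 mm else true]
    (~~ chg s && [forall u, if md u is Some mm then [&& ~~ mc mm, me1 mm, me2 mm & mp mm] else true]).

Definition ans (v : 'I_n) (s : nst) (a b : 'I_n) : bool :=
  [|| (a == v) && adj s b, (b == v) && adj s a,
      [exists u, adj s u && (((a == u) && t2 s u b) || ((b == u) && t2 s u a))]
    | [exists u, adj s u && (t3 s u a b || t3 s u b a)]].

Definition a_out (v : 'I_n) (s : nst) : option ('I_n -> 'I_n -> bool) :=
  if okf s then Some (ans v s) else None.

Definition alg : dds_alg n := @DDSAlg n nst a_init a_notify a_send a_recv a_out.

End Alg.

Lemma lastsel_eqsel (T : eqType) (g : T -> option bool) (w : T) (c : bool) (s : seq T) :
  (forall y, g y = if y == w then Some c else None) ->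
  lastsel g s = if w \in s then Some c else None.
Proof.
move=> Hg; elim: s => [|y s IH] //=; rewrite lastsel_cons IH in_cons Hg.
by case: (w \in s); rewrite ?orbT ?orbF // eq_sym; case: (y == w).
Qed.

Lemma lastsel_map (A B : Type) (h : B -> option bool) (f : A -> B) (s : seq A) :
  lastsel h (map f s) = lastsel (fun a => h (f a)) s.
Proof. by elim/last_ind: s => [|s a IH] //; rewrite map_rcons -!cats1 !lastsel_cat IH. Qed.

Section Exec.
Variables (n : nat) (G : dgraph n).
Hypothesis HG : valid_dgraph G.

Definition S i := @exec n (alg n) G i.
Definition Mid i v := @mid_of n (alg n) G i (S i.-1) v.

Lemma S_succ i v : S i.+1 v = a_recv v (Mid i.+1 v)
   (fun u => if G i.+1 u v then Some (a_send u (Mid i.+1 u) v) else None).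
Proof. by []. Qed.

Lemma Mid_succ i v : Mid i.+1 v = a_notify v (S i v)
   [set u | G i.+1 v u && ~~ G i v u] [set u | ~~ G i.+1 v u && G i v u].
Proof. by []. Qed.

Arguments S : simpl never.
Arguments Mid : simpl never.

Lemma adj_S i v x : adj (S i v) x = G i v x.
Proof.
elim: i v x => [|i IH] v x; first by case: HG => ->.
rewrite S_succ /= !inE IH.
by case: (G i.+1 v x); case: (G i v x).
Qed.

Lemma lastEv_Mid i v x : lastsel (sel1 x) (q1 (Mid i.+1 v)) =
  if G i.+1 v x != G i v x then Some (G i.+1 v x) else lastsel (sel1 x) (q1 (S i v)).
Proof.
rewrite Mid_succ /= lastsel_cat lastsel_map.
rewrite (@lastsel_eqsel _ _ x (x \in [set u | G i.+1 v u & ~~ G i v u])); last first.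
  by move=> y; rewrite /sel1 /=; case: eqP => [->|].
rewrite mem_filter mem_enum andbT !inE.
by case: (G i.+1 v x); case: (G i v x).
Qed.

Lemma size_q1_Mid i v : size (q1 (Mid i.+1 v)) =
  size (q1 (S i v)) + count (fun x => G i.+1 v x != G i v x) (enum 'I_n).
Proof.
rewrite Mid_succ /= size_cat size_map size_filter; congr (_ + _).
apply: eq_count => x; rewrite !inE; by case: (G i.+1 v x); case: (G i v x).
Qed.

Lemma lastQ2_Mid i v w x : lastsel (sel2 w x) (q2 (Mid i.+1 v)) =
  if G i v w && ~~ G i.+1 v w then Some false else lastsel (sel2 w x) (q2 (S i v)).
Proof.
rewrite Mid_succ /= lastsel_cat lastsel_map.
rewrite (@lastsel_eqsel _ _ w false); last first.
  by move=> y; rewrite /sel2 /=.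
rewrite mem_filter mem_enum andbT !inE andbC.
by case: (G i v w && ~~ G i.+1 v w).
Qed.

Lemma size_q2_Mid i v : size (q2 (Mid i.+1 v)) <=
  size (q2 (S i v)) + count (fun x => G i.+1 v x != G i v x) (enum 'I_n).
Proof.
rewrite Mid_succ /= size_cat size_map size_filter leq_add2l.
apply: sub_count => x /=; rewrite !inE; by case: (G i.+1 v x); case: (G i v x).
Qed.

Lemma chg_Mid i v : chg (Mid i.+1 v) = [exists x, G i.+1 v x != G i v x].
Proof.
rewrite Mid_succ /=; apply: eq_existsb => x; rewrite !inE.
by case: (G i.+1 v x); case: (G i v x).
Qed.

Lemma pf_Mid i v : pf (Mid i.+1 v) = pf (S i v). Proof. by []. Qed.

Lemma t2_Mid i v u : t2 (Mid i.+1 v) u =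
  if G i.+1 v u && ~~ G i v u then (fun _ => false) else t2 (S i v) u.
Proof. by rewrite Mid_succ /= inE. Qed.

Lemma t3_Mid i v u : t3 (Mid i.+1 v) u =
  if G i.+1 v u && ~~ G i v u then (fun _ _ => false) else t3 (S i v) u.
Proof. by rewrite Mid_succ /= inE. Qed.

Lemma q1_S i v : q1 (S i.+1 v) = behead (q1 (Mid i.+1 v)).
Proof. by []. Qed.

Definition fwdS i v := pmap (fwdf (fun u => omap (@dec n)
   (if G i.+1 u v then Some (a_send u (Mid i.+1 u) v) else None))) (enum 'I_n).

Lemma q2_S i v : q2 (S i.+1 v) = behead (q2 (Mid i.+1 v)) ++ fwdS i v.
Proof. by []. Qed.

Lemma lastQ2_fwd i v w x : lastsel (sel2 w x) (fwdS i v) =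
  if G i.+1 w v then obind (sel1 x) (ohead (q1 (Mid i.+1 w))) else None.
Proof.
rewrite /fwdS (@lastsel_pmap _ _ _ _ _ (fun u => u == w) _ _ w) //.
- rewrite has_pred1 mem_enum /fwdf; case: (G i.+1 w v) => //=.
  rewrite /a_send decK /=; case: (ohead _) => [[y b]|] //; by rewrite /sel2 /sel1 /= eqxx.
- move=> a /negbTE Ha; rewrite /fwdf; case: (G i.+1 a v) => //=.
  by rewrite /a_send decK /=; case: (ohead _) => //= [[y b]]; rewrite /sel2 /= Ha.
- by move=> a a' /eqP -> /eqP ->.
Qed.

Lemma size_fwd i v : size (fwdS i v) <= count (fun w => q1 (Mid i.+1 w) != [::]) (enum 'I_n).
Proof.
rewrite /fwdS size_pmap; apply: sub_count => w; rewrite /fwdf.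
case: (G i.+1 w v) => //; rewrite [omap _ _]/= /a_send decK; by case: (q1 (Mid i.+1 w)).
Qed.

Lemma t2_S i v u w : t2 (S i.+1 v) u w =
  if G i.+1 u v then odflt (t2 (Mid i.+1 v) u w) (obind (sel1 w) (ohead (q1 (Mid i.+1 u))))
  else t2 (Mid i.+1 v) u w.
Proof. rewrite S_succ /=; case: (G i.+1 u v) => //=; by rewrite /a_send decK. Qed.

Lemma t3_S i v u w x : t3 (S i.+1 v) u w x =
  if G i.+1 u v then odflt (t3 (Mid i.+1 v) u w x) (obind (sel2 w x) (ohead (q2 (Mid i.+1 u))))
  else t3 (Mid i.+1 v) u w x.
Proof. rewrite S_succ /=; case: (G i.+1 u v) => //=; by rewrite /a_send decK. Qed.

Lemma pf_S i v : pf (S i.+1 v) = [forall u, G i.+1 u v ==> (size (q1 (Mid i.+1 u)) <= 1)].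
Proof.
rewrite S_succ /=; apply: eq_forallb => u; case: (G i.+1 u v) => //=; by rewrite /a_send decK.
Qed.

Lemma okf_S i v : okf (S i.+1 v) = ~~ chg (Mid i.+1 v) &&
  [forall u, G i.+1 u v ==> [&& ~~ chg (Mid i.+1 u), size (q1 (Mid i.+1 u)) <= 1,
                               size (q2 (Mid i.+1 u)) <= 1 & pf (Mid i.+1 u)]].
Proof.
rewrite S_succ /=; congr (_ && _); apply: eq_forallb => u.
case: (G i.+1 u v) => //=; by rewrite /a_send decK.
Qed.

Lemma adj_Mid_S i v : adj (S i.+1 v) = adj (Mid i.+1 v). Proof. by []. Qed.

End Exec.
Set Implicit Arguments.
Unset Strict Implicit.
Unset Printing Implicit Defensive.
Opaque dec enc.

Lemma maxrec (P : nat -> bool) i :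
  \max_(j < i.+2 | P j) (j : nat) = maxn (\max_(j < i.+1 | P j) (j : nat)) (if P i.+1 then i.+1 else 0).
Proof. by rewrite big_mkcond big_ord_recr /= -big_mkcond. Qed.

Section Inv.
Variables (n : nat) (G : dgraph n).
Hypothesis HG : valid_dgraph G.

Notation S := (S G).
Notation Mid := (Mid G).
Notation it i u w := (ins_time G i u w).

Lemma Gsym i u w : G i u w = G i w u.
Proof. by case: HG => _ []. Qed.

Lemma it_le i u w : it i u w <= i.
Proof. by apply/bigmax_leqP => j _; rewrite -ltnS. Qed.

Lemma it_new i u w : G i.+1 u w -> ~~ G i u w -> it i.+1 u w = i.+1.
Proof.
move=> H1 H2; rewrite /ins_time (maxrec (fun j => G j u w && ~~ G j.-1 u w)) /= H1 H2 /=.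
by apply/maxn_idPr; apply: leq_trans (it_le i u w) _.
Qed.

Lemma it_same i u w : ~~ (G i.+1 u w && ~~ G i u w) -> it i.+1 u w = it i u w.
Proof. by move/negbTE=> H; rewrite /ins_time (maxrec (fun j => G j u w && ~~ G j.-1 u w)) /= H maxn0. Qed.

Lemma it_same2 i u w : G i u w -> it i.+1 u w = it i u w.
Proof. by move=> H; apply: it_same; rewrite H andbF. Qed.

Definition lastEv (q : seq ('I_n * bool)) x := lastsel (sel1 x) q.
Definition lastQ2 (q : seq ('I_n * option ('I_n * bool))) w x := lastsel (sel2 w x) q.

Definition INV1 i := forall u x b, lastEv (q1 (S i u)) x = Some b -> b = G i u x.
Definition INV2 i := forall v u, G i v u -> forall w,
  (odflt (t2 (S i v) u w) (lastEv (q1 (S i u)) w) -> G i u w) /\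
  (G i u w -> it i v u <= it i u w -> odflt (t2 (S i v) u w) (lastEv (q1 (S i u)) w)).
Definition U1 i := forall u w, ~~ G i u w -> forall x, lastQ2 (q2 (S i u)) w x != Some true.
Definition U2 i := forall u w, G i u w -> forall x, lastEv (q1 (S i w)) x = None ->
  lastQ2 (q2 (S i u)) w x = Some true -> G i w x.
Definition INV3b i := forall v u, G i v u -> forall w, ~~ G i u w -> forall x,
  odflt (t3 (S i v) u w x) (lastQ2 (q2 (S i u)) w x) = false.
Definition INV3a i := forall v u, G i v u -> forall w, G i u w -> forall x,
  (odflt (odflt (t3 (S i v) u w x) (lastQ2 (q2 (S i u)) w x)) (lastEv (q1 (S i w)) x) -> G i w x) /\
  (G i w x -> it i u w <= it i w x -> it i v u <= it i w x ->
     odflt (odflt (t3 (S i v) u w x) (lastQ2 (q2 (S i u)) w x)) (lastEv (q1 (S i w)) x)).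

Lemma inv1M i : INV1 i -> forall u x b, lastEv (q1 (Mid i.+1 u)) x = Some b -> b = G i.+1 u x.
Proof.
move=> H u x b; rewrite /lastEv lastEv_Mid.
case: ifP => [_ [] //|/negbFE/eqP E /H]; by rewrite E.
Qed.

Lemma inv1_step i : INV1 i -> INV1 i.+1.
Proof.
move=> H u x b; rewrite /lastEv q1_S => /lastsel_behead_some; exact: inv1M.
Qed.

Lemma inv2_step i : INV1 i -> INV2 i -> INV2 i.+1.
Proof.
move=> H1 H2 v u Hvu w.
have Huv : G i.+1 u v by rewrite Gsym.
rewrite /lastEv q1_S t2_S Huv odflt_behead t2_Mid lastEv_Mid.
case: (boolP (G i.+1 u w != G i u w)) => [_ /=|/negbNE/eqP Euw].
  by split => // ->.
have Hs : it i.+1 u w = it i u w by apply: it_same; rewrite Euw; case: (G i u w).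
rewrite Hs Euw.
case: (boolP (G i v u)) => Hvu0.
- rewrite Hvu /= it_same2 //; exact: H2.
- rewrite Hvu /= it_new //; split.
  + by case E: (lastsel _ _) => [b|] //= Hb; move: (H1 _ _ _ E); rewrite Hb.
  + by move=> _; rewrite ltnNge (leq_trans (it_le i u w)).
Qed.

Lemma odflt_if (d : bool) (o1 o2 : option bool) :
  odflt d (if o1 is Some b then Some b else o2) = odflt (odflt d o2) o1.
Proof. by case: o1. Qed.

Lemma u1_step i : U1 i -> U1 i.+1.
Proof.
move=> H u w Hn x; rewrite /lastQ2 q2_S lastsel_cat lastQ2_fwd.
have -> : G i.+1 w u = false by rewrite Gsym; exact: negbTE.
apply/negP => /eqP /lastsel_behead_some; rewrite lastQ2_Mid Hn andbT.
case: (boolP (G i u w)) => Hi; first by [].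
by move=> E; move/negP: (H u w Hi x); rewrite /lastQ2 E.
Qed.

Lemma u2_step i : INV1 i -> U1 i -> U2 i -> U2 i.+1.
Proof.
move=> H1 Hu1 Hu2 u w Huw x.
have Hwu : G i.+1 w u by rewrite Gsym.
rewrite /lastEv /lastQ2 q1_S q2_S lastsel_cat lastQ2_fwd Hwu => Hq.
have Hfull := lastsel_behead (sel1 x) (q1 (Mid i.+1 w)); rewrite Hq in Hfull.
case E: (obind (sel1 x) (ohead (q1 (Mid i.+1 w)))) => [b|] /=.
  by move=> [Hb]; rewrite Hb in E; rewrite E in Hfull; rewrite -(inv1M H1 Hfull).
move/lastsel_behead_some; rewrite lastQ2_Mid Huw andbF => Hq2.
rewrite E in Hfull; move: Hfull; rewrite lastEv_Mid.
case: ifP => // /negbFE/eqP -> Hq1.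
case: (boolP (G i u w)) => Hi; first exact: (Hu2 u w Hi x Hq1 Hq2).
by move/negP: (Hu1 u w Hi x); rewrite /lastQ2 Hq2.
Qed.

Lemma inv3b_step i : U1 i -> INV3b i -> INV3b i.+1.
Proof.
move=> Hu1 H3 v u Hvu w Hn x.
have Huv : G i.+1 u v by rewrite Gsym.
rewrite /lastQ2 q2_S lastsel_cat lastQ2_fwd.
have -> : G i.+1 w u = false by rewrite Gsym; exact: negbTE.
rewrite t3_S Huv odflt_behead lastQ2_Mid t3_Mid Hn andbT Hvu.
case: (boolP (G i u w)) => Hi; first by [].
case: (boolP (G i v u)) => Hvu0 /=; first exact: H3.
by move: (Hu1 u w Hi x); rewrite /lastQ2; case: (lastsel _ _) => [[]|].
Qed.

Lemma inv3a_step i : INV1 i -> U1 i -> U2 i -> INV3b i -> INV3a i -> INV3a i.+1.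
Proof.
move=> H1 Hu1 Hu2 H3b H3a v u Hvu w Huw x.
have Huv : G i.+1 u v by rewrite Gsym.
have Hwu : G i.+1 w u by rewrite Gsym.
rewrite /lastEv /lastQ2 q1_S q2_S lastsel_cat lastQ2_fwd Hwu odflt_if.
rewrite t3_S Huv odflt_behead odflt_behead lastQ2_Mid Huw andbF t3_Mid Hvu lastEv_Mid.
case: (boolP (G i.+1 w x != G i w x)) => [_ /=|/negbNE/eqP Ewx].
  by split => // ->.
have Hswx : it i.+1 w x = it i w x by apply: it_same; rewrite Ewx; case: (G i w x).
rewrite Hswx Ewx.
case: (boolP (G i v u)) => Hvu0 /=.
- case: (boolP (G i u w)) => Huw0.
  + rewrite (it_same2 Hvu0) (it_same2 Huw0); exact: H3a.
  + rewrite (H3b v u Hvu0 w Huw0 x) (it_new Huw Huw0); split.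
    * by case E: (lastsel _ (q1 _)) => [b|] //= Hb; move: (H1 _ _ _ E); rewrite Hb.
    * by move=> _; rewrite ltnNge (leq_trans (it_le i w x)).
- rewrite (it_new Hvu Hvu0); split.
  + case E: (lastsel _ (q1 _)) => [b|] /=.
      by move=> Hb; move: (H1 _ _ _ E); rewrite Hb.
    case E2: (lastsel _ (q2 _)) => [b|] //= Hb; rewrite Hb in E2.
    case: (boolP (G i u w)) => Huw0; first exact: (Hu2 u w Huw0 x E E2).
    by move/negP: (Hu1 u w Huw0 x); rewrite /lastQ2 E2.
  + by move=> _ _; rewrite ltnNge (leq_trans (it_le i w x)).
Qed.

End Inv.
Set Implicit Arguments.
Unset Strict Implicit.
Unset Printing Implicit Defensive.
Opaque dec enc.

Section Out.
Variables (n : nat) (G : dgraph n).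
Hypothesis HG : valid_dgraph G.

Notation S := (S G).
Notation Mid := (Mid G).
Notation it i u w := (ins_time G i u w).

Lemma S0 v : S 0 v = a_init v. Proof. by []. Qed.

Lemma invs i : INV1 G i /\ INV2 G i /\ U1 G i /\ U2 G i /\ INV3b G i /\ INV3a G i.
Proof.
elim: i => [|i [H1 [H2 [Hu1 [Hu2 [H3b H3a]]]]]].
  have G0 : forall u w, G 0 u w = false by case: HG.
  split; first by move=> u x b; rewrite /lastEv S0.
  split; first by move=> v u; rewrite G0.
  split; first by move=> u w _ x; rewrite /lastQ2 S0.
  split; first by move=> u w; rewrite G0.
  by split; move=> v u; rewrite G0.
split; first exact: inv1_step.
split; first exact: inv2_step.
split; first exact: u1_step.
split; first exact: u2_step.
split; first exact: inv3b_step.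
exact: inv3a_step.
Qed.

Lemma pf_empty i u : pf (S i u) -> forall w, G i w u -> q1 (S i w) = [::].
Proof.
case: i => [|i]; first by move=> _ w; rewrite S0.
rewrite pf_S => /forallP H w Hw; move: (H w); rewrite Hw implyTb q1_S.
by case: (q1 _) => [|? []].
Qed.

Lemma nochg i v : ~~ chg (Mid i.+1 v) -> forall x, G i.+1 v x = G i v x.
Proof.
rewrite chg_Mid => /existsPn H x; move: (H x); by case: (G i.+1 v x); case: (G i v x).
Qed.

Section Round.
Variables (i : nat) (v : 'I_n).
Hypothesis Hok : okf (S i.+1 v).

Let Hv : ~~ chg (Mid i.+1 v). Proof. by move: Hok; rewrite okf_S => /andP []. Qed.
Let Hu u : G i.+1 u v -> [&& ~~ chg (Mid i.+1 u), size (q1 (Mid i.+1 u)) <= 1,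
                               size (q2 (Mid i.+1 u)) <= 1 & pf (Mid i.+1 u)].
Proof. by move: Hok; rewrite okf_S => /andP [_ /forallP H] Hg; move: (H u); rewrite Hg. Qed.

Lemma adj_out x : adj (S i.+1 v) x = G i v x.
Proof. by rewrite adj_S // (nochg Hv). Qed.

Lemma t2_out u w : G i v u ->
  t2 (S i.+1 v) u w = odflt (t2 (S i v) u w) (lastEv (q1 (S i u)) w).
Proof.
move=> Hvu; have Hvu' : G i.+1 v u by rewrite (nochg Hv).
have Huv : G i.+1 u v by rewrite (Gsym HG).
case/and4P: (Hu Huv) => Hcu Hs1 _ _.
rewrite t2_S Huv t2_Mid Hvu Hvu' /= -lastsel_small // /lastEv lastEv_Mid (nochg Hcu).
by rewrite eqxx.
Qed.

Lemma t3_out u w x : G i v u ->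
  t3 (S i.+1 v) u w x = odflt (t3 (S i v) u w x) (lastQ2 (q2 (S i u)) w x).
Proof.
move=> Hvu; have Hvu' : G i.+1 v u by rewrite (nochg Hv).
have Huv : G i.+1 u v by rewrite (Gsym HG).
case/and4P: (Hu Huv) => Hcu _ Hs2 _.
rewrite t3_S Huv t3_Mid Hvu Hvu' /= -lastsel_small // /lastQ2 lastQ2_Mid (nochg Hcu).
by rewrite andbN.
Qed.

Lemma q1_out u w : G i v u -> G i u w -> q1 (S i w) = [::].
Proof.
move=> Hvu Huw; have Hvu' : G i.+1 v u by rewrite (nochg Hv).
have Huv : G i.+1 u v by rewrite (Gsym HG).
case/and4P: (Hu Huv) => _ _ _; rewrite pf_Mid => Hp.
by apply: (pf_empty Hp); rewrite (Gsym HG).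
Qed.

Lemma pair_eqP (a b u w : 'I_n) : Defs.pair_eq a b u w -> a = u /\ b = w \/ a = w /\ b = u.
Proof. by rewrite /Defs.pair_eq => /orP [/andP [/eqP -> /eqP ->]|/andP [/eqP -> /eqP ->]]; [left|right]. Qed.

Lemma ans_R3 a b : in_R3 G i v a b -> ans v (S i.+1 v) a b.
Proof.
have [H1 [H2 [Hu1 [Hu2 [H3b H3a]]]]] := invs i.
rewrite /in_R3 => /andP [Hab /or3P [/orP [/eqP Ea|/eqP Eb]|/existsP [u /existsP [w]]|/existsP [u /existsP [w /existsP [x]]]]].
- by rewrite /ans Ea eqxx adj_out -Ea Hab.
- subst b; by rewrite /ans !adj_out eqxx ((Gsym HG) i v a) Hab orbT.
- case/and4P => Hvu Huw Hp Ht.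
  have T2 : t2 (S i.+1 v) u w by rewrite t2_out //; case: (H2 v u Hvu w) => _; apply.
  apply/orP; right; apply/orP; right; apply/orP; left; apply/existsP; exists u.
  rewrite adj_out Hvu andTb.
  by case: (pair_eqP Hp) => [[-> ->]|[-> ->]]; rewrite eqxx T2 ?orbT.
- case/and5P => Hvu Huw Hwx Hp /andP [Ht1 Ht2].
  have T3 : t3 (S i.+1 v) u w x.
    rewrite t3_out //; case: (H3a v u Hvu w Huw x) => _ /(_ Hwx Ht1 Ht2).
    by rewrite /lastEv (q1_out Hvu Huw).
  apply/orP; right; apply/orP; right; apply/orP; right; apply/existsP; exists u.
  rewrite adj_out Hvu andTb.
  by case: (pair_eqP Hp) => [[-> ->]|[-> ->]]; rewrite T3 ?orbT.
Qed.

Lemma t3_sound u w x : G i v u -> t3 (S i.+1 v) u w x -> G i u w && G i w x.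
Proof.
have [H1 [H2 [Hu1 [Hu2 [H3b H3a]]]]] := invs i.
move=> Hvu; rewrite t3_out //.
case: (boolP (G i u w)) => Huw; last by rewrite (H3b v u Hvu w Huw x).
case: (H3a v u Hvu w Huw x) => + _; rewrite /lastEv (q1_out Hvu Huw) /=; exact.
Qed.

Lemma ans_E3 a b : ans v (S i.+1 v) a b -> in_E3 G i v a b.
Proof.
have [H1 [H2 [Hu1 [Hu2 [H3b H3a]]]]] := invs i.
rewrite /ans /in_E3 !adj_out.
case/or4P => [/andP [/eqP Ea Hb]|/andP [/eqP Eb Ha]|/existsP [u /andP [Hvu H]]|/existsP [u /andP [Hvu H]]].
- rewrite Ea Hb /=; apply/existsP; exists v; by rewrite eqxx.
- rewrite Eb (Gsym HG) Ha /=; apply/existsP; exists v; by rewrite eqxx orbT.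
- rewrite adj_out in Hvu; case/orP: H => /andP [/eqP E T].
  + rewrite t2_out // in T; have := (H2 v u Hvu b).1 T => Hub.
    rewrite E Hub /=; apply/existsP; exists u; by rewrite eqxx Hvu orbT.
  + rewrite t2_out // in T; have := (H2 v u Hvu a).1 T => Hua.
    rewrite E (Gsym HG) Hua /=; apply/existsP; exists u; by rewrite eqxx Hvu !orbT.
- rewrite adj_out in Hvu; case/orP: H => /(t3_sound Hvu) /andP [Hux Hw].
  + rewrite Hw /=; apply/existsP; exists a; rewrite eqxx /=.
    apply/orP; right; apply/orP; right; apply/existsP; exists u; by rewrite Hvu Hux.
  + rewrite (Gsym HG) Hw /=; apply/existsP; exists b; rewrite eqxx orbT /=.
    apply/orP; right; apply/orP; right; apply/existsP; exists u; by rewrite Hvu Hux.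
Qed.

End Round.

Lemma answers_ok : answers_correct (alg n) G.
Proof.
move=> i v f; change (a_out v (S i.+1 v) = Some f -> forall a b : 'I_n, (in_R3 G i v a b -> f a b) /\ (~~ in_E3 G i v a b -> ~~ f a b)).
rewrite /a_out; case Hok: (okf _) => // ; case => <- a b; split.
- exact: (ans_R3 Hok).
- by apply: contra; apply: (ans_E3 Hok).
Qed.

End Out.
Set Implicit Arguments.
Unset Strict Implicit.
Unset Printing Implicit Defensive.
Opaque dec enc.

Lemma cnt n (P : pred 'I_n) : count P (enum 'I_n) = \sum_x (P x : nat).
Proof.
rewrite -sum1_count big_enum_cond /= big_mkcond /=.
by apply: eq_bigr => x _; case: (P x).
Qed.

Section Amort.
Variables (n : nat) (G : dgraph n).
Hypothesis HG : valid_dgraph G.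

Notation S := (S G).
Notation Mid := (Mid G).

Definition tog j (w x : 'I_n) := G j w x != G j.-1 w x.

Lemma tog_sym j w x : tog j w x = tog j x w.
Proof. by rewrite /tog !(Gsym HG _ w x). Qed.

Lemma tog_irr j w : tog j w w = false.
Proof. by case: HG => _ [_ H]; rewrite /tog !H. Qed.

Lemma sum_tog j : \sum_(w : 'I_n) \sum_(x : 'I_n) (tog j w x : nat) = 2 * num_changes G j.
Proof.
rewrite /num_changes -sum1dep_card.
have E : \sum_(p : 'I_n * 'I_n | (p.1 < p.2) && (G j p.1 p.2 != G j.-1 p.1 p.2)) 1
       = \sum_(w : 'I_n) \sum_(x : 'I_n) (((w < x) && tog j w x) : nat).
  rewrite pair_bigA /= big_mkcond /=; apply: eq_bigr => p _.
  by case: (_ && _).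
rewrite E mul2n -addnn.
have -> : \sum_(w : 'I_n) \sum_(x : 'I_n) (tog j w x : nat) =
   \sum_(w : 'I_n) \sum_(x : 'I_n) ((((w < x) && tog j w x) : nat) + (((x < w) && tog j w x) : nat)).
  apply: eq_bigr => w _; apply: eq_bigr => x _.
  case: (ltngtP w x) => [Hlt|Hgt|Heq] /=.
  - by rewrite addn0.
  - by rewrite add0n.
  - have Ewx : w = x by apply: val_inj.
    by rewrite Ewx tog_irr.
have -> : \sum_(w : 'I_n) \sum_(x : 'I_n) ((((w < x) && tog j w x) : nat) + (((x < w) && tog j w x) : nat))
  = \sum_(w : 'I_n) \sum_(x : 'I_n) (((w < x) && tog j w x) : nat) +
    \sum_(w : 'I_n) \sum_(x : 'I_n) (((x < w) && tog j w x) : nat).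
  by rewrite -big_split /=; apply: eq_bigr => w _; rewrite -big_split.
congr (_ + _); rewrite exchange_big /=.
by apply: eq_bigr => w _; apply: eq_bigr => x _; rewrite tog_sym.
Qed.


Definition Phi i := 2 * \sum_(w : 'I_n) size (q1 (S i w)) + \max_(w : 'I_n) size (q2 (S i w)).
Definition busy i := [exists w : 'I_n, (1 < size (q1 (Mid i w))) || (1 < size (q2 (Mid i w)))].

Lemma phi_step i : Phi i.+1 + busy i.+1 <= Phi i + 6 * num_changes G i.+1.
Proof.
set A := \sum_(w : 'I_n) size (q1 (S i w)).
set B := \max_(w : 'I_n) size (q2 (S i w)).
set S1 := \sum_(w : 'I_n) size (q1 (Mid i.+1 w)).
set M2 := \max_(w : 'I_n) size (q2 (Mid i.+1 w)).
set N1 := count (fun w => q1 (Mid i.+1 w) != [::]) (enum 'I_n).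
set D := \sum_(w : 'I_n) count (fun x => G i.+1 w x != G i w x) (enum 'I_n).
have hD : D = 2 * num_changes G i.+1.
  by rewrite -sum_tog /D; apply: eq_bigr => w _; rewrite cnt.
have hS1 : S1 = A + D.
  by rewrite /S1 /A /D -big_split; apply: eq_bigr => w _; exact: size_q1_Mid.
have hM2 : M2 <= B + D.
  apply/bigmax_leqP => u _; apply: leq_trans (size_q2_Mid G i u) _.
  apply: leq_add; first exact: (leq_bigmax u (F := fun w => size (q2 (S i w)))).
  by rewrite /D (bigD1 u) //= leq_addr.
have hA' : \sum_(w : 'I_n) size (q1 (S i.+1 w)) + N1 = S1.
  rewrite /N1 cnt -big_split /S1; apply: eq_bigr => w _.
  rewrite q1_S size_behead; case: (q1 (Mid i.+1 w)) => [|? ?] //=; by rewrite addn1.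
have hB' : \max_(w : 'I_n) size (q2 (S i.+1 w)) <= M2.-1 + N1.
  apply/bigmax_leqP => u _; rewrite q2_S size_cat size_behead; apply: leq_add.
    rewrite -!subn1 leq_sub2r //.
    exact: (leq_bigmax u (F := fun w => size (q2 (Mid i.+1 w)))).
  exact: size_fwd.
have hbusy : busy i.+1 -> (0 < N1) || (0 < M2).
  case/existsP => w /orP [H|H].
    apply/orP; left; rewrite /N1 -has_count; apply/hasP; exists w; first exact: mem_enum.
    by move: H; case: (q1 (Mid i.+1 w)).
  apply/orP; right; apply: leq_trans _ (leq_bigmax w (F := fun w => size (q2 (Mid i.+1 w)))).
  exact: ltnW.
rewrite /Phi -/A -/B.
move: hA' hB' hS1 hM2 hD.
set A' := \sum_(w : 'I_n) _.
set B' := \max_(w : 'I_n) _.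
case: (busy i.+1) hbusy => [/(_ isT) /orP [] H|_] /=; lia.
Qed.

Lemma tog_nc j v x : G j v x != G j.-1 v x -> 0 < num_changes G j.
Proof.
move=> H; rewrite /num_changes; apply/card_gt0P.
case: (ltngtP v x) => [Hlt|Hgt|Heq].
- by exists (v, x); rewrite inE /= Hlt H.
- by exists (x, v); rewrite inE /= Hgt; rewrite !(Gsym HG _ x v).
- have Ev : v = x by apply: val_inj.
  by move: H; rewrite Ev; case: HG => _ [_ Hi]; rewrite !Hi.
Qed.

Lemma chg_nc i v : chg (Mid i.+1 v) -> 0 < num_changes G i.+1.
Proof. by rewrite chg_Mid => /existsP [x Hx]; apply: (tog_nc Hx). Qed.

Definition busyb i := if i is 0 then false else busy i.

Lemma inc_step i : (inconsistent_at (alg n) G i.+1 : nat) <=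
  (0 < num_changes G i.+1) + busy i.+1 + busyb i.
Proof.
case: (boolP (inconsistent_at (alg n) G i.+1)) => //.
case/existsP => v Hv0; change (is_true (~~ isSome (a_out v (S i.+1 v)))) in Hv0.
have : ~~ okf (S i.+1 v) by move: Hv0; rewrite /a_out; case: (okf _).
 rewrite okf_S negb_and negbK.
case/orP => [/chg_nc -> //|].
rewrite negb_forall => /existsP [u]; rewrite negb_imply => /andP [Hg].
rewrite negb_and negbK => /orP [/chg_nc -> //|].
have Hb : forall b, (1 < b) = ~~ (b <= 1) by move=> b; rewrite ltnNge.
rewrite negb_and => /orP [H|].
  have -> : busy i.+1 by apply/existsP; exists u; rewrite Hb H.
  by rewrite addnAC addn1.
rewrite negb_and => /orP [H|].
  have -> : busy i.+1 by apply/existsP; exists u; rewrite !Hb H orbT.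
  by rewrite addnAC addn1.
rewrite pf_Mid; move: Hv0 Hg; case: i => [|i] _ _; first by [].
rewrite pf_S negb_forall => /existsP [w]; rewrite negb_imply => /andP [_ H].
have -> : busyb i.+1 by apply/existsP; exists w; rewrite Hb H.
by rewrite addn1.
Qed.

Lemma S0size w : size (q1 (S 0 w)) = 0 /\ size (q2 (S 0 w)) = 0.
Proof. by []. Qed.

Lemma main_bound i :
  inconsistent_rounds (alg n) G i + 2 * Phi i + busyb i <= 13 * total_changes G i.
Proof.
elim: i => [|i IH].
  rewrite /inconsistent_rounds /total_changes !big_geq // /Phi.
  rewrite big1 ?(big1 (op := maxn)) //.
have E : forall F : nat -> nat, \sum_(1 <= j < i.+2) F j = \sum_(1 <= j < i.+1) F j + F i.+1.
  by move=> F; rewrite big_nat_recr.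
rewrite /inconsistent_rounds /total_changes (E (fun j => inconsistent_at (alg n) G j : nat)) (E (num_changes G)).
move: IH; rewrite /inconsistent_rounds /total_changes.
set IR := \sum_(1 <= j < i.+1) _.
set T := \sum_(1 <= j < i.+1) _.
have h1 := inc_step i.
have h2 := phi_step i.
have h3 : (0 < num_changes G i.+1) <= num_changes G i.+1 by case: (num_changes _ _).
move: h1 h2 h3.
set a := (inconsistent_at _ _ _ : nat).
set b := (busy i.+1 : nat).
set c := (busyb i : nat).
set d := (0 < num_changes G i.+1 : nat).
rewrite /busyb -/b.
lia.
Qed.

End Amort.
Opaque dec enc.

Theorem theorem8 :
  exists c C : nat, forall n : nat, exists A : dds_alg n,
    forall G : dgraph n, valid_dgraph G ->
      [/\ msg_bounded A G C,
          answers_correct A G &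
          forall i : nat, (inconsistent_rounds A G i <= c * total_changes G i)%N].
Proof.
exists 13, 12 => n; exists (alg n) => G HG; split.
- move=> i u v _; rewrite -(kbE n); exact: size_enc.
- exact: answers_ok.
- move=> i; apply: leq_trans (main_bound HG i); by rewrite -addnA leq_addr.
Qed.
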